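(* Let $0<\epsilon<1/3$. Suppose $G=(U\cup V,E)$ is a bipartite graph and $H=n\otimes G$ where $n=\max\{|U|,|V|\}$. If $H$ has an $\epsilon$-regular partition of size $t$, then $G$ has a $36\epsilon^{1/18}$-regular partition of size at most $2t+2$.
   Context: For a bipartite graph $G=(U\cup V,E)$ and $n\ge1$, $n\otimes G$ is the $3$-graph with vertex set $U\cup V\cup\{c_1,\dots,c_n\}$ ($c_i$ new vertices) and edge set $\{\{c_i,u,w\}: i\in[n], uw\in E\}$. Graph regularity: $d_G(X,Y)=|\{(x,y)\in X\times Y:xy\in E\}|/(|X||Y|)$; $(X,Y)$ is $\eta$-regular if $|d_G(X,Y)-d_G(X',Y')|\le\eta$ for all $X'\subseteq X,Y'\subseteq Y$ with $|X'|\ge\eta|X|,|Y'|\ge\eta|Y|$; a partition $\mathcal P$ of $V(G)$ (not necessarily equitable; pairs $(X,X)$ allowed) is $\eta$-regular if at least $(1-\eta)|V(G)|^2$ pairs of $V(G)^2$ lie in $X\times Y$ for some $\eta$-regular $(X,Y)\in\mathcal P^2$. $3$-graph regularity: $d_H(X,Y,Z)=|\{(x,y,z)\in X\times Y\times Z:\{x,y,z\}\in E(H)\}|/(|X||Y||Z|)$; $(X,Y,Z)$ is $\epsilon$-regular if $|d_H(X,Y,Z)-d_H(X',Y',Z')|\le\epsilon$ for all subsets of sizes at least $\epsilon|X|,\epsilon|Y|,\epsilon|Z|$; a partition $\mathcal P$ of $V(H)$ is $\epsilon$-regular if at least $(1-\epsilon)|V(H)|^3$ triples of $V(H)^3$ lie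 in $X\times Y\times Z$ for some $\epsilon$-regular $(X,Y,Z)\in\mathcal P^3$. *)

(* Defs.v *)
From HB Require Import structures.
From mathcomp Require Import all_boot all_order all_algebra.
From mathcomp Require Import reals exp.
Set Implicit Arguments. Unset Strict Implicit. Unset Printing Implicit Defensive.
Import Order.TTheory GRing.Theory Num.Theory.
Local Open Scope ring_scope.

Definition bipartite (T : finType) (U V : {set T}) (e : rel T) : Prop :=
  [disjoint U & V] /\ U :|: V = [set: T] /\
  (forall x y, e x y = e y x) /\
  (forall x y, e x y -> (x \in U /\ y \in V) \/ (x \in V /\ y \in U)).

Definition dens2 {R : realType} (T : finType) (e : rel T) (X Y : {set T}) : R :=
  #|[set p in setX X Y | e p.1 p.2]|%:R / (#|X| * #|Y|)%:R.

Definition reg2 {R : realType} (T : finType) (e : rel T) (eta : R) (X Y : {set T}) : bool :=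
  [forall X' : {set T}, forall Y' : {set T},
    [&& X' \subset X, Y' \subset Y, eta * #|X|%:R <= #|X'|%:R & eta * #|Y|%:R <= #|Y'|%:R]
    ==> (`|dens2 e X Y - dens2 e X' Y'| <= eta)].

Definition reg_partition2 {R : realType} (T : finType) (e : rel T) (eta : R)
    (P : {set {set T}}) : Prop :=
  partition P [set: T] /\
  (1 - eta) * (#|T| ^ 2)%:R <=
    #|[set p : T * T | [exists X in P, exists Y in P,
         [&& reg2 e eta X Y, p.1 \in X & p.2 \in Y]]]|%:R.

Definition dens3 {R : realType} (W : finType) (Eh : {set {set W}}) (X Y Z : {set W}) : R :=
  #|[set p : W * W * W | [&& p.1.1 \in X, p.1.2 \in Y, p.2 \in Z &
        [set p.1.1; p.1.2; p.2] \in Eh]]|%:R / (#|X| * #|Y| * #|Z|)%:R.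

Definition reg3 {R : realType} (W : finType) (Eh : {set {set W}}) (eps : R)
    (X Y Z : {set W}) : bool :=
  [forall X' : {set W}, forall Y' : {set W}, forall Z' : {set W},
    [&& X' \subset X, Y' \subset Y, Z' \subset Z,
        eps * #|X|%:R <= #|X'|%:R, eps * #|Y|%:R <= #|Y'|%:R &
        eps * #|Z|%:R <= #|Z'|%:R]
    ==> (`|dens3 Eh X Y Z - dens3 Eh X' Y' Z'| <= eps)].

Definition reg_partition3 {R : realType} (W : finType) (Eh : {set {set W}}) (eps : R)
    (P : {set {set W}}) : Prop :=
  partition P [set: W] /\
  (1 - eps) * (#|W| ^ 3)%:R <=
    #|[set p : W * W * W | [exists X in P, exists Y in P, exists Z in P,
         [&& reg3 Eh eps X Y Z, p.1.1 \in X, p.1.2 \in Y & p.2 \in Z]]]|%:R.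

(* n ⊗ G : vertex set T + {c_0,...,c_{n-1}}, edges {c_i, u, w} for uw ∈ E *)
Definition tensor_edges (T : finType) (e : rel T) (n : nat) : {set {set (T + 'I_n)}} :=
  (fun p : 'I_n * (T * T) => [set inr p.1; inl p.2.1; inl p.2.2])
    @: [set p : 'I_n * (T * T) | e p.2.1 p.2.2].

(* Main.v *)
Require Import Defs.
From HB Require Import structures.
From mathcomp Require Import all_boot all_order all_algebra.
From mathcomp Require Import reals exp.
From mathcomp Require Import zify ring lra.
Import Order.TTheory GRing.Theory Num.Theory.
Local Open Scope ring_scope.

Lemma inl_eq (A B : eqType) (a b : A) : (inl a == inl b :> A + B) = (a == b).
Proof. by apply/eqP/eqP => [[]|->]. Qed.
Lemma inr_eq (A B : eqType) (a b : B) : (inr a == inr b :> A + B) = (a == b).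
Proof. by apply/eqP/eqP => [[]|->]. Qed.
Lemma inlr_eq (A B : eqType) (a : A) (b : B) : (inl a == inr b :> A + B) = false.
Proof. by apply/eqP. Qed.
Lemma inrl_eq (A B : eqType) (a : A) (b : B) : (inr b == inl a :> A + B) = false.
Proof. by apply/eqP. Qed.

Lemma edge_tensor (T : finType) (e : rel T) (n : nat) (esym : forall x y, e x y = e y x)
  (x y : T) (i : 'I_n) :
  ([set inl x; inl y; inr i] \in tensor_edges e n) = e x y.
Proof.
apply/idP/idP.
  case/imsetP => [[j [u w]]]; rewrite inE /= => euw Heq.
  have hx : inl x \in [set inr j; inl u; inl w] by rewrite -Heq !inE eqxx.
  have hy : inl y \in [set inr j; inl u; inl w] by rewrite -Heq !inE eqxx ?orbT.
  have hu : inl u \in [set inl x; inl y; inr i] by rewrite Heq !inE eqxx ?orbT.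
  have hw : inl w \in [set inl x; inl y; inr i] by rewrite Heq !inE eqxx ?orbT.
  rewrite !inE /= ?inl_eq ?inlr_eq ?inrl_eq ?orbF /= in hx hy hu hw.
  case/orP: hx => /eqP Ex; case/orP: hy => /eqP Ey; subst x y => //; try by rewrite esym.
    by move: hw; rewrite orbb => /eqP Ew; rewrite Ew in euw.
  by move: hu; rewrite orbb => /eqP Ew; rewrite Ew in euw.
move=> exy; apply/imsetP; exists (i, (x, y)); first by rewrite inE.
by apply/setP => a; rewrite !inE /= orbC orbA.
Qed.

Lemma card_inl (A B : finType) (S : {set A}) : #|(@inl A B) @: S| = #|S|.
Proof. by apply: card_imset => a b []. Qed.
Lemma card_inr (A B : finType) (S : {set B}) : #|(@inr A B) @: S| = #|S|.
Proof. by apply: card_imset => a b []. Qed.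

Lemma dens_transfer (R : realType) (T : finType) (e : rel T) (n : nat)
  (esym : forall x y, e x y = e y x) (X' Y' : {set T}) (Z' : {set 'I_n}) :
  Z' != set0 ->
  @dens3 R _ (tensor_edges e n) (inl @: X') (inl @: Y') (inr @: Z') = dens2 e X' Y'.
Proof.
move=> Zn0.
rewrite /dens3 /dens2 !card_inl card_inr.
set f := fun q : (T * T) * 'I_n => (inl q.1.1, inl q.1.2, inr q.2) : (T + 'I_n) * (T + 'I_n) * (T + 'I_n).
have finj : injective f by move=> [[a b] c] [[a' b'] c'] [] -> -> ->.
set S := [set p : (T + 'I_n) * (T + 'I_n) * (T + 'I_n) | _].
have -> : S = f @: setX [set p in setX X' Y' | e p.1 p.2] Z'.
  apply/setP => [[[a b] c]]; rewrite !inE /=; apply/idP/idP.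
    case/and4P => /imsetP [x xX ->] /imsetP [y yY ->] /imsetP [z zZ ->].
    rewrite edge_tensor // => exy.
    by apply/imsetP; exists ((x, y), z); rewrite // !inE /= xX yY exy zZ.
  case/imsetP => [[[x y] z]]; rewrite !inE /= => /andP [] /andP [] /andP [] xX yY exy zZ [-> -> ->].
  by (rewrite !mem_imset ?xX ?yY ?zZ ?edge_tensor //; move=> ? ? []).
rewrite card_imset // cardsX !natrM invfM mulrACA divff ?mulr1 //.
by rewrite pnatr_eq0 -lt0n card_gt0.
Qed.

Definition preL (T : finType) (n : nat) (X : {set T + 'I_n}) := [set x : T | inl x \in X].
Definition preR (T : finType) (n : nat) (X : {set T + 'I_n}) := [set i : 'I_n | inr i \in X].
Arguments preL {T n}.
Arguments preR {T n}.

Lemma sub_inl (T : finType) (n : nat) (X : {set T + 'I_n}) (X' : {set T}) :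
  X' \subset preL X -> inl @: X' \subset X.
Proof. by move/subsetP => sX; apply/subsetP => w /imsetP [x /sX]; rewrite inE => xX ->. Qed.
Lemma sub_inr (T : finType) (n : nat) (X : {set T + 'I_n}) (X' : {set 'I_n}) :
  X' \subset preR X -> inr @: X' \subset X.
Proof. by move/subsetP => sX; apply/subsetP => w /imsetP [x /sX]; rewrite inE => xX ->. Qed.

Lemma reg_transfer (R : realType) (T : finType) (e : rel T) (n : nat)
  (esym : forall x y, e x y = e y x) (eps eta delta : R) (X Y Z : {set T + 'I_n}) :
  0 < eps -> 0 <= delta -> eps <= eta * delta -> eps <= delta -> 2 * eps <= eta ->
  reg3 (tensor_edges e n) eps X Y Z ->
  delta * #|X|%:R <= #|preL X|%:R -> delta * #|Y|%:R <= #|preL Y|%:R ->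
  eps * #|Z|%:R <= #|preR Z|%:R -> preR Z != set0 ->
  reg2 e eta (preL X) (preL Y).
Proof.
move=> eps0 d0 ed epsd eeta Hreg hX hY hZ Zn0.
have eta0 : 0 <= eta by lra.
have key : forall X' Y' : {set T}, X' \subset preL X -> Y' \subset preL Y ->
    eps * #|X|%:R <= #|X'|%:R -> eps * #|Y|%:R <= #|Y'|%:R ->
    `|@dens3 R _ (tensor_edges e n) X Y Z - dens2 e X' Y'| <= eps.
  move=> X' Y' sX sY cX cY.
  rewrite -(@dens_transfer R T e n esym X' Y' _ Zn0).
  move: Hreg => /forallP/(_ (inl @: X'))/forallP/(_ (inl @: Y'))/forallP/(_ (inr @: preR Z))/implyP.
  apply; rewrite !card_inl card_inr sub_inl // sub_inl // sub_inr ?subxx //=.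
  by rewrite cX cY hZ.
have kXY := key _ _ (subxx _) (subxx _).
have cXX : eps * #|X|%:R <= #|preL X|%:R.
  by apply: le_trans hX; rewrite ler_wpM2r.
have cYY : eps * #|Y|%:R <= #|preL Y|%:R.
  by apply: le_trans hY; rewrite ler_wpM2r.
move: {kXY}(kXY cXX cYY); rewrite ler_norml => /andP [k1 k2].
apply/forallP => X'; apply/forallP => Y'; apply/implyP => /and4P [sX sY cX cY].
have cX' : eps * #|X|%:R <= #|X'|%:R.
  apply: le_trans cX; apply: le_trans (_ : eta * (delta * #|X|%:R) <= _).
    by rewrite mulrA ler_wpM2r.
  by rewrite ler_wpM2l.
have cY' : eps * #|Y|%:R <= #|Y'|%:R.
  apply: le_trans cY; apply: le_trans (_ : eta * (delta * #|Y|%:R) <= _).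
    by rewrite mulrA ler_wpM2r.
  by rewrite ler_wpM2l.
move: (key _ _ sX sY cX' cY'); rewrite ler_norml => /andP [k3 k4].
rewrite ler_norml; apply/andP; split; lra.
Qed.

Lemma card_bigcup_le (J A : finType) (Pj : pred J) (F : J -> {set A}) :
  (#|\bigcup_(j | Pj j) F j| <= \sum_(j | Pj j) #|F j|)%N.
Proof.
elim/big_rec2: _ => [|j S k _ IH]; first by rewrite cards0.
apply: leq_trans (leq_card_setU _ _) _; by rewrite leq_add2l.
Qed.

Lemma bad_count (R : realType) (W T' : finType) (P : {set {set W}}) (h : T' -> W) (c : R) :
  partition P [set: W] -> 0 <= c ->
  #|[set y : T' | ~~ (c * #|pblock P (h y)|%:R <= #|[set z | h z \in pblock P (h y)]|%:R)]|%:R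
    <= c * #|W|%:R.
Proof.
move=> Ppart c0.
have covP : cover P = [set: W] by case/and3P: Ppart => /eqP.
set bad := fun X : {set W} => ~~ (c * #|X|%:R <= #|[set z | h z \in X]|%:R).
have sub : [set y : T' | ~~ (c * #|pblock P (h y)|%:R <= #|[set z | h z \in pblock P (h y)]|%:R)]
    \subset \bigcup_(X in P | bad X) [set z | h z \in X].
  apply/subsetP => y; rewrite inE => hy; apply/bigcupP; exists (pblock P (h y)).
    by rewrite pblock_mem ?covP ?inE //.
  by rewrite inE mem_pblock covP inE.
apply: le_trans (_ : (\sum_(X in P | bad X) #|[set z | h z \in X]|)%:R <= _).
  rewrite ler_nat; apply: leq_trans (subset_leq_card sub) _; exact: card_bigcup_le.
rewrite natr_sum.
apply: le_trans (_ : \sum_(X in P | bad X) c * #|X|%:R <= _).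
  by apply: ler_sum => X /andP [_ bX]; move: bX; rewrite /bad -ltNge => /ltW.
apply: le_trans (_ : \sum_(X in P) c * #|X|%:R <= _).
  rewrite [X in _ <= X](bigID bad) /= lerDl; apply: sumr_ge0 => X _.
  by rewrite mulr_ge0.
by rewrite -mulr_sumr -natr_sum -(card_partition Ppart) cardsT.
Qed.
Lemma final_arith (R : realType) (N m s eps b1 gC bC b3 c3 sS3 sS2 cS2 : R) :
 0 < s -> 36 * s < 1 -> 0 < eps -> eps <= s * s * s -> 1 <= m -> m <= N -> N <= 2 * m ->
 0 <= b1 -> 0 <= gC -> 0 <= bC -> 0 <= b3 -> 0 <= c3 ->
 sS3 + c3 = (N + m) * (N + m) * (N + m) -> (1 - eps) * ((N + m) * (N + m) * (N + m)) <= sS3 ->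
 sS2 + cS2 = N * N -> cS2 <= b1 * N + N * b1 + b3 -> b3 * gC <= c3 ->
 b1 <= s * (N + m) -> bC <= eps * (N + m) -> gC + bC = m ->
 (1 - 36 * s) * (N * N) <= sS2.
Proof.
move=> s0 s1 e0 es m1 mN Nm b10 gC0 bC0 b30 c30 eS3 H3 eS2 cS2le cB3 hb1 hbC eGC.
have N0 : 0 < N by lra.
have ss : s * s <= s by nra.
have sss : s * s * s <= s by nra.
have epss : eps <= s by lra.
have h1 : b1 <= 2 * s * N by nra.
have h1' : b1 * N + N * b1 <= 4 * s * (N * N) by nra.
have bCle : bC <= eps * (3 * m) by nra.
have h2 : N / 4 <= gC.
  have : eps * (3 * m) <= m / 2 by nra.
  lra.
have h3 : c3 <= eps * (N + m) * (N + m) * (N + m) by nra.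
have NmN : N + m <= 2 * N by lra.
have h3' : (N + m) * (N + m) * (N + m) <= 8 * (N * N * N).
  have : (N + m) * (N + m) <= 4 * (N * N) by nra.
  nra.
have h4 : b3 * (N / 4) <= 8 * eps * (N * N * N) by nra.
have h5 : b3 <= 32 * eps * (N * N).
  have : b3 * N <= (32 * eps * (N * N)) * N by nra.
  by rewrite ler_pM2r.
nra.
Qed.
Theorem lemma5p3 (R : realType) (T : finType) (U V : {set T}) (e : rel T)
    (eps : R) (t : nat) :
  bipartite U V e -> 0 < eps -> eps < 1 / 3 ->
  (0 < maxn #|U| #|V|)%N ->
  (exists P : {set {set (T + 'I_(maxn #|U| #|V|))}},
      reg_partition3 (tensor_edges e (maxn #|U| #|V|)) eps P /\ #|P| = t) ->
  exists Q : {set {set T}},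
    reg_partition2 e (36 * eps `^ (18^-1)) Q /\ (#|Q| <= 2 * t + 2)%N.
Proof.
move=> [disUV [UVT [esym ebip]]] eps0 eps13 n0 [P [[Ppart H3] Pt]].
move: Ppart H3 Pt; set n := maxn #|U| #|V| => Ppart H3 Pt.
have covP : cover P = [set: T + 'I_n] by case/and3P: Ppart => /eqP.
have tP : trivIset P by case/and3P: Ppart.
set s := eps `^ 18^-1.
set Q := [set preL X | X in P] :\ set0.
have preLn0 : forall x, preL (pblock P (inl x)) != set0.
  by move=> x; apply/set0Pn; exists x; rewrite inE mem_pblock covP inE.
have inQ : forall x, preL (pblock P (inl x)) \in Q.
  by move=> x; rewrite !inE preLn0 /= imset_f // pblock_mem // covP inE.
exists Q; split; last first.
  apply: leq_trans (_ : #|P| <= _)%N; last by rewrite Pt; lia.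
  apply: leq_trans (leq_imset_card preL P); apply: subset_leq_card; exact: subD1set.
split.
  apply/and3P; split.
  - apply/eqP/setP => x; rewrite inE; apply/bigcupP; exists (preL (pblock P (inl x))) => //.
    by rewrite inE mem_pblock covP inE.
  - apply/trivIsetP => A B; rewrite !inE => /andP [_ /imsetP [X XP ->]] /andP [_ /imsetP [Y YP ->]] neq.
    have XY : X != Y by apply: contraNneq neq => ->.
    have dXY := (trivIsetP tP) X Y XP YP XY.
    rewrite -setI_eq0; apply/eqP/setP => x; rewrite !inE.
    by case: (boolP (inl x \in X)) => // hx; rewrite (disjointFr dXY hx).
  - by rewrite !inE eqxx.
have s0 : 0 < s by apply: powR_gt0.
have s18 : s ^+ 18 = eps.
  by rewrite /s -powR_mulrn ?powR_ge0 // -powRrM mulVf ?pnatr_eq0 // powRr1 // ltW.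
case: (lerP 1 (36 * s)) => heta.
  apply: le_trans (_ : 0 <= _); last exact: ler0n.
  by apply: mulr_le0_ge0; [lra | exact: ler0n].
have s1 : s <= 1 by lra.
have eps3 : eps <= s * s * s.
  have -> : s * s * s = s ^+ 3 by rewrite !exprS expr0 mulr1 mulrA.
  rewrite -s18 (_ : 18 = 3 + 15)%N // exprD.
  rewrite ler_piMr ?exprn_ge0 ?ltW // exprn_ilt1 ?ltW //; lra.
move: H3; set S3 := [set p | _] => H3.
set S2 := [set p | _].
pose good1 x := s * #|pblock P (inl x)|%:R <= #|preL (pblock P (inl x))|%:R.
pose goodC z := eps * #|pblock P (inr z)|%:R <= #|preR (pblock P (inr z))|%:R.
have C1 : forall x y z, good1 x -> good1 y -> goodC z ->
    (inl x, inl y, inr z) \in S3 -> (x, y) \in S2.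
  move=> x y z gx gy gz; rewrite inE => /existsP [X /andP [XP /existsP [Y /andP [YP
     /existsP [Z /andP [ZP /and4P [r xX yY zZ]]]]]]].
  rewrite /= in xX yY zZ.
  move: gx gy gz; rewrite /good1 /goodC (def_pblock tP XP xX) (def_pblock tP YP yY)
     (def_pblock tP ZP zZ) => gx gy gz.
  rewrite inE; apply/existsP; exists (preL X); rewrite -(def_pblock tP XP xX) inQ /=.
  apply/existsP; exists (preL Y); rewrite -(def_pblock tP YP yY) inQ /=.
  rewrite (def_pblock tP XP xX) (def_pblock tP YP yY) !inE xX yY !andbT.
  apply: (@reg_transfer R T e n esym eps (36 * s) s X Y Z eps0 (ltW s0) _ _ _ r gx gy gz).
  - nra.
  - nra.
  - nra.
  - by apply/set0Pn; exists z; rewrite inE.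
set Bad1 := [set x | ~~ good1 x].
set GoodC := [set z | goodC z].
set B3 := [set p : T * T | [forall z, goodC z ==> ((inl p.1, inl p.2, inr z) \notin S3)]].
have subC : ~: S2 \subset setX Bad1 [set: T] :|: setX [set: T] Bad1 :|: B3.
  apply/subsetP => -[x y]; rewrite inE => nS.
  rewrite !inE /=.
  case: (boolP (good1 x)) => gx; case: (boolP (good1 y)) => gy //=.
  apply/forallP => z; apply/implyP => gz; apply: contra nS; exact: C1.
have cS2 : (#|~: S2| <= #|Bad1| * #|T| + #|T| * #|Bad1| + #|B3|)%N.
  apply: leq_trans (subset_leq_card subC) _.
  apply: leq_trans (leq_card_setU _ _) _; rewrite leq_add2r.
  by apply: leq_trans (leq_card_setU _ _) _; rewrite !cardsX !cardsT.
have cB3 : (#|B3| * #|GoodC| <= #|~: S3|)%N.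
  pose g := fun q : (T * T) * 'I_n => (inl q.1.1, inl q.1.2, inr q.2) : (T + 'I_n) * (T + 'I_n) * (T + 'I_n).
  have ginj : injective g by move=> [[a b] c] [[a' b'] c'] [] -> -> ->.
  rewrite -cardsX -(card_imset _ ginj); apply: subset_leq_card.
  apply/subsetP => w /imsetP [[[x y] z]]; rewrite !inE /= => /andP [hB gz] ->.
  by move/forallP: hB => /(_ z) /implyP /(_ gz); rewrite !inE.
have b1 : #|Bad1|%:R <= s * #|{: (T + 'I_n)%type}|%:R.
  exact: (@bad_count R _ T P inl s Ppart (ltW s0)).
have bC : #|~: GoodC|%:R <= eps * #|{: (T + 'I_n)%type}|%:R.
  have -> : ~: GoodC = [set z | ~~ goodC z] by apply/setP => z; rewrite !inE.
  exact: (@bad_count R _ 'I_n P inr eps Ppart (ltW eps0)).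
have eGC := cardsC GoodC.
have eS3 := cardsC S3.
have eS2 := cardsC S2.
rewrite !card_prod card_sum card_ord in eS3 eS2 b1 bC eGC H3.
have TUV : #|T| = (#|U| + #|V|)%N.
  by rewrite -cardsT -UVT cardsU (disjoint_setI0 disUV) cards0 subn0.
have nT : (n <= #|T|)%N by rewrite TUV geq_max leq_addr leq_addl.
have Tn : (#|T| <= 2 * n)%N by rewrite TUV mul2n -addnn leq_add ?leq_maxl ?leq_maxr.

rewrite natrX expr2.
apply: (@final_arith R #|T|%:R n%:R s eps #|Bad1|%:R #|GoodC|%:R #|~: GoodC|%:R #|B3|%:R
   #|~: S3|%:R #|S3|%:R #|S2|%:R #|~: S2|%:R s0 heta eps0 eps3) => //.
- by rewrite ler1n.
- by rewrite ler_nat.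
- by rewrite -natrM ler_nat.
- by rewrite -natrD eS3 !natrM natrD.
- have e3 : forall x : R, x ^+ 3 = x * x * x by move=> x; ring.
  by move: H3; rewrite natrX natrD e3.
- by rewrite -natrD eS2 natrM.
- by rewrite -!natrM -!natrD ler_nat.
- by rewrite -natrM ler_nat.
- by rewrite -natrD.
- by rewrite -natrD.
- by rewrite -natrD eGC.
Qed.
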